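(* Suppose the set $\mathcal P_e$ of PNE of the M-FSIG is nonempty, let $\tilde{\mathbf a}\in\arg\min_{\mathbf a\in\mathcal P_e}W(\mathbf a)$ and let $\mathcal S_{\tilde{\mathbf a}}$ be the set of sharing users in $\tilde{\mathbf a}$. Then \[ \frac{\min_{\mathbf a\in\mathcal P_e}W(\mathbf a)}{\max_{\mathbf a\in\{1,\dots,K\}^N}W(\mathbf a)}\ \ge\ \frac{\sum_{n\in\{1,\dots,N\}\setminus\mathcal S_{\tilde{\mathbf a}}}w_n\log_2\!\big(1+\frac{P_n}{N_0}|h_{n,n,(K-M+1)}|^2\big)}{\sum_{n=1}^N w_n\log_2\!\big(1+\frac{P_n}{N_0}|h_{n,n,(K)}|^2\big)}. \]
   Context: $N$ users, $K$ REs, nonzero complex channel gains $h_{n_1,n_2,k}$, powers $P_n>0$, noise $N_0>0$, weights $w_n>0$. Profiles $\mathbf a\in\{1,\dots,K\}^N$; interference $I_k(\mathbf a_{-n})=\sum_{m'\ne n:\,a_{m'}=k}|h_{m',n,k}|^2P_{m'}$; rate $R_n(\mathbf a)=\log_2\!\big(1+\frac{P_n|h_{n,n,a_n}|^2}{N_0+I_{a_n}(\mathbf a_{-n})}\big)$; $W(\mathbf a)=\sum_n w_nR_n(\mathbf a)$. $|h_{n,n,(j)}|$ is the $j$-th smallest of $|h_{n,n,1}|,\dots,|h_{n,n,K}|$. M-FSIG with integer parameter $1\le M\le K$: utility $u_n(\mathbf a)=\log_2\!\big(1+\frac{P_n|h_{n,n,(K-M+1)}|^2}{N_0+I_{a_n}(\mathbf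 a_{-n})}\big)$ if $|h_{n,n,a_n}|\ge|h_{n,n,(K-M+1)}|$, and $0$ otherwise; PNE are profiles where no user can strictly improve his utility unilaterally. A sharing user is a user $n$ such that $a_{m'}=a_n$ for some $m'\neq n$. *)

(* Defs.v *)
From Stdlib Require Import Reals List Arith.
Import ListNotations.
Open Scope R_scope.

(* Users are indexed 0..N-1, resource elements (REs) 0..K-1
   (the paper's 1..N and 1..K shifted by one). *)

(* Complex numbers as pairs (re, im); modulus. *)
Definition cabs (z : R * R) : R := sqrt (fst z ^ 2 + snd z ^ 2).

Definition log2 (x : R) : R := ln x / ln 2.

Definition fsum (n : nat) (f : nat -> R) : R :=
  fold_right (fun i acc => f i + acc) 0 (seq 0 n).

(* j-th smallest (1-based j, 1 <= j <= K) of the values x 0, ..., x (K-1):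
   the minimum of those values v such that #{k < K | x k <= v} >= j. *)
Definition cnt_le (K : nat) (x : nat -> R) (v : R) : nat :=
  length (filter (fun k => if Rle_dec (x k) v then true else false) (seq 0 K)).

Definition ordstat (K : nat) (x : nat -> R) (j : nat) : R :=
  let mx := fold_right (fun k acc => Rmax (x k) acc) (x 0%nat) (seq 0 K) in
  fold_right (fun k acc => Rmin (x k) acc) mx
    (filter (fun k => Nat.leb j (cnt_le K x (x k))) (seq 0 K)).

(* A strategy profile: a n is the RE chosen by user n (for n < N). *)
Definition valid_profile (N K : nat) (a : nat -> nat) : Prop :=
  forall n, (n < N)%nat -> (a n < K)%nat.

Definition upd (a : nat -> nat) (n k : nat) : nat -> nat :=
  fun m => if Nat.eqb m n then k else a m.

(* interference I_k(a_{-n}) at user n on RE k;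
   h m n k is the channel gain from user m to user n on RE k *)
Definition interf (N : nat) (h : nat -> nat -> nat -> R * R) (P : nat -> R)
  (a : nat -> nat) (n k : nat) : R :=
  fsum N (fun m => if andb (negb (Nat.eqb m n)) (Nat.eqb (a m) k)
                   then (cabs (h m n k))^2 * P m else 0).

Definition rate (N : nat) (h : nat -> nat -> nat -> R * R) (P : nat -> R) (N0 : R)
  (a : nat -> nat) (n : nat) : R :=
  log2 (1 + P n * (cabs (h n n (a n)))^2 / (N0 + interf N h P a n (a n))).

Definition welfare (N : nat) (h : nat -> nat -> nat -> R * R) (P w : nat -> R) (N0 : R)
  (a : nat -> nat) : R :=
  fsum N (fun n => w n * rate N h P N0 a n).

Definition hord (K : nat) (h : nat -> nat -> nat -> R * R) (n j : nat) : R :=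
  ordstat K (fun k => cabs (h n n k)) j.

Definition util (N K M : nat) (h : nat -> nat -> nat -> R * R) (P : nat -> R) (N0 : R)
  (a : nat -> nat) (n : nat) : R :=
  if Rle_dec (hord K h n (K - M + 1)) (cabs (h n n (a n)))
  then log2 (1 + P n * (hord K h n (K - M + 1))^2 / (N0 + interf N h P a n (a n)))
  else 0.

Definition is_PNE (N K M : nat) (h : nat -> nat -> nat -> R * R) (P : nat -> R) (N0 : R)
  (a : nat -> nat) : Prop :=
  valid_profile N K a /\
  forall n k, (n < N)%nat -> (k < K)%nat ->
    util N K M h P N0 (upd a n k) n <= util N K M h P N0 a n.

Definition sharing (N : nat) (a : nat -> nat) (n : nat) : bool :=
  existsb (fun m => andb (negb (Nat.eqb m n)) (Nat.eqb (a m) (a n))) (seq 0 N).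

(* Main.v *)
Require Import Defs.
From Stdlib Require Import Reals List Arith Lra Lia.
Import ListNotations.
Open Scope R_scope.

Lemma fr_le (f g : nat -> R) l :
  (forall i, In i l -> f i <= g i) ->
  fold_right (fun i acc => f i + acc) 0 l <= fold_right (fun i acc => g i + acc) 0 l.
Proof.
  induction l as [|a l IH]; simpl; intros H; [lra|].
  pose proof (H a (or_introl eq_refl)).
  assert (fold_right (fun i acc => f i + acc) 0 l <= fold_right (fun i acc => g i + acc) 0 l)
    by (apply IH; auto). lra.
Qed.

Lemma fsum_le N f g : (forall i, (i < N)%nat -> f i <= g i) -> fsum N f <= fsum N g.
Proof. intros H; unfold fsum; apply fr_le; intros i Hi; apply in_seq in Hi; apply H; lia. Qed.

Lemma fsum_ext N f g : (forall i, (i < N)%nat -> f i = g i) -> fsum N f = fsum N g.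
Proof. intros H; apply Rle_antisym; apply fsum_le; intros i Hi; rewrite H; lra || auto; lra. Qed.

Lemma fsum_zero N : fsum N (fun _ => 0) = 0.
Proof. unfold fsum. generalize (seq 0 N); induction l; simpl; lra. Qed.

Lemma fsum_pos N f : (1 <= N)%nat -> (forall i, (i < N)%nat -> 0 < f i) -> 0 < fsum N f.
Proof.
  intros HN H. unfold fsum. destruct N as [|N]; [lia|]. simpl.
  assert (0 <= fold_right (fun i acc => f i + acc) 0 (seq 1 N)).
  { assert (fold_right (fun i acc => 0 + acc) 0 (seq 1 N) <= fold_right (fun i acc => f i + acc) 0 (seq 1 N)).
    { apply fr_le. intros i Hi; apply in_seq in Hi. apply Rlt_le, H; lia. }
    assert (fold_right (fun (i:nat) acc => 0 + acc) 0 (seq 1 N) = 0).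
    { generalize (seq 1 N); induction l; simpl; lra. } lra. }
  pose proof (H 0%nat ltac:(lia)). lra.
Qed.

Lemma fmax_val (x : nat -> R) init l :
  fold_right (fun k acc => Rmax (x k) acc) init l = init \/
  exists k, In k l /\ fold_right (fun k acc => Rmax (x k) acc) init l = x k.
Proof.
  induction l as [|a l IH]; simpl; [auto|].
  unfold Rmax at 1 3. destruct Rle_dec.
  - destruct IH as [E|[k [Hk E]]]; [left; auto| right; exists k; split; [right|]; auto].
  - right; exists a; split; [left|]; auto.
Qed.

Lemma fmin_val (x : nat -> R) init l :
  fold_right (fun k acc => Rmin (x k) acc) init l = init \/
  exists k, In k l /\ fold_right (fun k acc => Rmin (x k) acc) init l = x k.
Proof.
  induction l as [|a l IH]; simpl; [auto|].
  unfold Rmin at 1 3. destruct Rle_dec.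
  - right; exists a; split; [left|]; auto.
  - destruct IH as [E|[k [Hk E]]]; [left; auto| right; exists k; split; [right|]; auto].
Qed.

Lemma fmax_ge (x : nat -> R) init l :
  init <= fold_right (fun k acc => Rmax (x k) acc) init l /\
  forall k, In k l -> x k <= fold_right (fun k acc => Rmax (x k) acc) init l.
Proof.
  induction l as [|a l IH]; simpl; [split; [lra| tauto]|].
  destruct IH as [H1 H2]. split.
  - eapply Rle_trans; [apply H1| apply Rmax_r].
  - intros k [<-|Hk]; [apply Rmax_l|]. eapply Rle_trans; [apply H2; auto| apply Rmax_r].
Qed.

Lemma fmin_ge (x : nat -> R) init l v :
  v <= init -> (forall k, In k l -> v <= x k) ->
  v <= fold_right (fun k acc => Rmin (x k) acc) init l.
Proof.
  induction l as [|a l IH]; simpl; intros H1 H2; auto.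
  apply Rmin_glb; auto.
Qed.

Lemma ordstat_val K x j : (1 <= K)%nat -> exists k, (k < K)%nat /\ ordstat K x j = x k.
Proof.
  intros HK. unfold ordstat. cbv zeta.
  destruct (fmin_val x (fold_right (fun k acc => Rmax (x k) acc) (x 0%nat) (seq 0 K))
     (filter (fun k => Nat.leb j (cnt_le K x (x k))) (seq 0 K))) as [E|[k [Hk E]]].
  - rewrite E. destruct (fmax_val x (x 0%nat) (seq 0 K)) as [E2|[k [Hk E2]]].
    + exists 0%nat; split; [lia| auto].
    + apply in_seq in Hk. exists k; split; [lia| auto].
  - apply filter_In in Hk. destruct Hk as [Hk _]. apply in_seq in Hk.
    exists k; split; [lia|auto].
Qed.

Lemma filter_full {A} (f : A -> bool) l :
  length (filter f l) = length l -> forall y, In y l -> f y = true.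
Proof.
  induction l as [|a l IH]; simpl; intros H y Hy; [tauto|].
  destruct (f a) eqn:Ea.
  - simpl in H. destruct Hy as [<-|Hy]; auto; apply IH; auto; lia.
  - exfalso. pose proof (filter_length_le f l). simpl in H. lia.
Qed.

Lemma ordstat_max K x : forall k, (k < K)%nat -> x k <= ordstat K x K.
Proof.
  intros k Hk. unfold ordstat. cbv zeta. apply fmin_ge.
  - apply (proj2 (fmax_ge x (x 0%nat) (seq 0 K))). apply in_seq; lia.
  - intros k' Hk'. apply filter_In in Hk'. destruct Hk' as [_ Hc].
    apply Nat.leb_le in Hc. unfold cnt_le in Hc.
    pose proof (filter_length_le (fun k0 => if Rle_dec (x k0) (x k') then true else false) (seq 0 K)).
    rewrite length_seq in *.
    assert (Hf := filter_full (fun k0 => if Rle_dec (x k0) (x k') then true else false) (seq 0 K)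
       ltac:(rewrite length_seq; lia) k ltac:(apply in_seq; lia)).
    simpl in Hf. destruct Rle_dec; [auto| discriminate].
Qed.

Lemma cabs_pos z : z <> (0,0) -> 0 < cabs z.
Proof.
  destruct z as [a b]; intros H. unfold cabs; simpl. apply sqrt_lt_R0.
  destruct (Req_dec a 0) as [->|Ha].
  - destruct (Req_dec b 0) as [->|Hb]; [congruence|]. nra.
  - nra.
Qed.

Lemma cabs_nn z : 0 <= cabs z.
Proof. unfold cabs; apply sqrt_pos. Qed.

Lemma log2_le x y : 0 < x -> x <= y -> log2 x <= log2 y.
Proof.
  intros Hx Hxy. unfold log2, Rdiv. apply Rmult_le_compat_r.
  - apply Rlt_le, Rinv_0_lt_compat. rewrite <- ln_1. apply ln_increasing; lra.
  - destruct Hxy as [Hl|He]; [apply Rlt_le, ln_increasing; auto| subst; lra].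
Qed.

Lemma log2_pos x : 1 < x -> 0 < log2 x.
Proof.
  intros Hx. unfold log2, Rdiv. apply Rmult_lt_0_compat.
  - rewrite <- ln_1. apply ln_increasing; lra.
  - apply Rinv_0_lt_compat. rewrite <- ln_1. apply ln_increasing; lra.
Qed.

Lemma interf_nn N h P a n k : (forall n, 0 < P n) -> 0 <= interf N h P a n k.
Proof.
  intros HP. unfold interf. apply Rle_trans with (fsum N (fun _ => 0)); [rewrite fsum_zero; lra|]. apply fsum_le.
  intros i _. destruct andb; [|lra]. pose proof (HP i). pose proof (cabs_nn (h i n k)). apply Rmult_le_pos; [apply pow_le|]; lra.
Qed.

Lemma interf_nonshare N h P a n : sharing N a n = false -> interf N h P a n (a n) = 0.
Proof.
  intros Hs. unfold interf. transitivity (fsum N (fun _ => 0)); [|apply fsum_zero]. apply fsum_ext.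
  intros i Hi. destruct (andb (negb (i =? n)%nat) (a i =? a n)%nat) eqn:E; auto.
  exfalso. unfold sharing in Hs.
  assert (existsb (fun m => andb (negb (m =? n)%nat) (a m =? a n)%nat) (seq 0 N) = true).
  { apply existsb_exists. exists i; split; auto. apply in_seq; lia. }
  congruence.
Qed.

Theorem mainTheorem6
  (N K M : nat) (h : nat -> nat -> nat -> R * R) (P w : nat -> R) (N0 : R)
  (HN : (1 <= N)%nat) (HM1 : (1 <= M)%nat) (HMK : (M <= K)%nat)
  (Hh : forall n1 n2 k, h n1 n2 k <> (0, 0))
  (HP : forall n, 0 < P n) (HN0 : 0 < N0) (Hw : forall n, 0 < w n)
  (at_ : nat -> nat)
  (Hat : is_PNE N K M h P N0 at_)
  (Hatmin : forall a, is_PNE N K M h P N0 a -> welfare N h P w N0 at_ <= welfare N h P w N0 a)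
  (astar : nat -> nat)
  (Hastar : valid_profile N K astar)
  (Hastarmax : forall a, valid_profile N K a -> welfare N h P w N0 a <= welfare N h P w N0 astar) :
  welfare N h P w N0 at_ / welfare N h P w N0 astar >=
  fsum N (fun n => if sharing N at_ n then 0
                   else w n * log2 (1 + P n / N0 * (hord K h n (K - M + 1))^2))
  / fsum N (fun n => w n * log2 (1 + P n / N0 * (hord K h n K)^2)).
Proof.
  destruct Hat as [Hval Hne].
  assert (HK : (1 <= K)%nat) by lia.
  assert (Hthr : forall n, (n < N)%nat ->
     0 < hord K h n (K - M + 1) /\ hord K h n (K - M + 1) <= cabs (h n n (at_ n))).
  { intros n Hn.
    destruct (ordstat_val K (fun k => cabs (h n n k)) (K - M + 1) HK) as [k0 [Hk0 E]].
    fold (hord K h n (K - M + 1)) in E.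
    assert (Ht : 0 < hord K h n (K - M + 1)) by (rewrite E; apply cabs_pos; auto).
    split; auto.
    pose proof (Hne n k0 Hn Hk0) as Hd.
    unfold util in Hd. unfold upd in Hd. rewrite Nat.eqb_refl in Hd. fold (upd at_ n k0) in Hd.
    destruct (Rle_dec (hord K h n (K - M + 1)) (cabs (h n n k0))) as [_|C]; [|rewrite E in C; lra].
    destruct (Rle_dec (hord K h n (K - M + 1)) (cabs (h n n (at_ n)))) as [r|C]; auto.
    exfalso.
    assert (0 < log2 (1 + P n * hord K h n (K - M + 1) ^ 2 / (N0 + interf N h P (upd at_ n k0) n k0))).
    { apply log2_pos. pose proof (interf_nn N h P (upd at_ n k0) n k0 HP).
      pose proof (HP n). assert (0 < P n * hord K h n (K - M + 1) ^ 2) by (apply Rmult_lt_0_compat; auto; apply pow_lt; auto).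
      assert (0 < P n * hord K h n (K - M + 1) ^ 2 / (N0 + interf N h P (upd at_ n k0) n k0))
        by (apply Rdiv_lt_0_compat; lra). lra. }
    lra. }
  set (num := fsum N _). set (D := fsum N _).
  set (Wa := welfare N h P w N0 at_). set (Ws := welfare N h P w N0 astar).
  assert (Hnum : num <= Wa).
  { unfold num, Wa, welfare. apply fsum_le. intros n Hn.
    destruct (Hthr n Hn) as [Ht Hc].
    assert (Hr : 0 <= rate N h P N0 at_ n).
    { unfold rate. left; apply log2_pos. pose proof (interf_nn N h P at_ n (at_ n) HP).
      assert (0 < P n * cabs (h n n (at_ n)) ^ 2) by (apply Rmult_lt_0_compat; auto; apply pow_lt; lra).
      assert (0 < P n * cabs (h n n (at_ n)) ^ 2 / (N0 + interf N h P at_ n (at_ n)))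
        by (apply Rdiv_lt_0_compat; lra). lra. }
    destruct (sharing N at_ n) eqn:Es.
    - pose proof (Hw n). nra.
    - apply Rmult_le_compat_l; [apply Rlt_le, Hw|]. unfold rate.
      rewrite interf_nonshare by auto. rewrite Rplus_0_r.
      pose proof (HP n).
      assert (0 < P n / N0 * hord K h n (K - M + 1) ^ 2)
        by (apply Rmult_lt_0_compat; [apply Rdiv_lt_0_compat; auto| apply pow_lt; auto]).
      apply log2_le; [lra|].
      assert (hord K h n (K - M + 1) ^ 2 <= cabs (h n n (at_ n)) ^ 2) by (apply pow_incr; lra).
      assert (P n / N0 * hord K h n (K - M + 1) ^ 2 <= P n / N0 * cabs (h n n (at_ n)) ^ 2)
        by (apply Rmult_le_compat_l; [apply Rlt_le, Rdiv_lt_0_compat; auto| auto]).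
      unfold Rdiv in *. lra. }
  assert (HWs : Ws <= D).
  { unfold Ws, D, welfare. apply fsum_le. intros n Hn.
    apply Rmult_le_compat_l; [apply Rlt_le, Hw|]. unfold rate.
    pose proof (interf_nn N h P astar n (astar n) HP). pose proof (HP n).
    set (I := interf N h P astar n (astar n)) in *.
    set (c := cabs (h n n (astar n))).
    assert (Hc : 0 < c) by (apply cabs_pos; auto).
    assert (HcH : c <= hord K h n K) by (apply (ordstat_max K (fun k => cabs (h n n k))); auto).
    apply log2_le.
    - assert (0 < P n * c ^ 2 / (N0 + I)) by (apply Rdiv_lt_0_compat; [apply Rmult_lt_0_compat; auto; apply pow_lt; auto| lra]). lra.
    - assert (c ^ 2 <= hord K h n K ^ 2) by (apply pow_incr; lra).
      assert (0 < c ^ 2) by (apply pow_lt; auto).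
      assert (P n * c ^ 2 / (N0 + I) <= P n * c ^ 2 / N0).
      { unfold Rdiv. apply Rmult_le_compat_l; [nra|]. apply Rinv_le_contravar; lra. }
      assert (P n * c ^ 2 / N0 <= P n / N0 * hord K h n K ^ 2).
      { unfold Rdiv. replace (P n * / N0 * hord K h n K ^ 2) with ((P n * / N0) * hord K h n K ^ 2) by ring.
        replace (P n * c ^ 2 * / N0) with ((P n * / N0) * c ^ 2) by ring.
        apply Rmult_le_compat_l; auto.
        apply Rlt_le, Rmult_lt_0_compat; auto; apply Rinv_0_lt_compat; auto. }
      lra. }
  assert (Hnum0 : 0 <= num).
  { unfold num. apply Rle_trans with (fsum N (fun _ => 0)); [rewrite fsum_zero; lra|]. apply fsum_le. intros n Hn.
    destruct sharing; [lra|]. apply Rlt_le, Rmult_lt_0_compat; auto. apply log2_pos.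
    destruct (Hthr n Hn) as [Ht _]. pose proof (HP n).
    assert (0 < P n / N0 * hord K h n (K - M + 1) ^ 2)
      by (apply Rmult_lt_0_compat; [apply Rdiv_lt_0_compat; auto| apply pow_lt; auto]). lra. }
  assert (HWa : 0 < Wa).
  { unfold Wa, welfare. apply fsum_pos; auto. intros n Hn. apply Rmult_lt_0_compat; auto.
    destruct (Hthr n Hn) as [Ht Hc].
    unfold rate. apply log2_pos. pose proof (interf_nn N h P at_ n (at_ n) HP). pose proof (HP n).
    assert (0 < P n * cabs (h n n (at_ n)) ^ 2) by (apply Rmult_lt_0_compat; auto; apply pow_lt; lra).
    assert (0 < P n * cabs (h n n (at_ n)) ^ 2 / (N0 + interf N h P at_ n (at_ n)))
      by (apply Rdiv_lt_0_compat; lra). lra. }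
  assert (HWsWa : Wa <= Ws) by (apply Hastarmax; exact Hval).
  apply Rle_ge. unfold Rdiv.
  apply Rle_trans with (num * / Ws).
  - apply Rmult_le_compat_l; auto. apply Rinv_le_contravar; lra.
  - apply Rmult_le_compat_r; auto. apply Rlt_le, Rinv_0_lt_compat; lra.
Qed.
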